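(* Let $K$ be a field and $f\colon R\to S$ a morphism of Zinbiel algebras. If $H^2_{\mathrm{Zinb}}(f,f)=0$, then $f$ is rigid.
   Context: A Zinbiel algebra over $K$ is a $K$-vector space $R$ with bilinear product $x\cdot y$ (also written $m_R(x,y)$) satisfying $(x\cdot y)\cdot z=x\cdot(y\cdot z)+x\cdot(z\cdot y)$. A morphism $f\colon R\to S$ is a linear map with $f(x\cdot y)=f(x)\cdot f(y)$. $R$ is a bimodule over itself, $S$ over itself, and $S$ is an $R$-bimodule via $r\cdot s=f(r)\cdot s$, $s\cdot r=s\cdot f(r)$. For a bimodule $A$ over $R$ and $1\le n\le4$, $C^n_{\mathrm{Zinb}}(R,A)=\mathrm{Hom}_K(R^{\otimes n},A)$ with $(d^1\varphi)(x,y)=x\cdot\varphi(y)-\varphi(x\cdot y)+\varphi(x)\cdot y$, $(d^2\varphi)(x,y,z)=x\cdot(\varphi(y,z)+\varphi(z,y))-\varphi(x\cdot y,z)+\varphi(x,y\cdot z+z\cdot y)-\varphi(x,y)\cdot z$, $(d^3\varphi)(x,y,z,w)=x\cdot\{\varphi(y,z,w)-\varphi(z,w,y)+\varphi(z,y,w)-\varphi(w,z,y)\}-\varphi(x\cdot y,z,w)+\varphi(x,y\cdot z+z\cdot y,w)-\varphi(x,y,z\cdot w+w\cdot z)+\varphi(x,y,z)\cdot w$. The deformation complex: $C^0_{\mathrm{Zinb}}(R,S)=0$, $d^0=0$, $C^n_{\mathrm{Zinb}}(f,f)=C^n_{\mathrm{Zinb}}(R,R)\times C^n_{\mathrm{Zinb}}(S,S)\times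 C^{n-1}_{\mathrm{Zinb}}(R,S)$ ($1\le n\le4$), $d^i_f(\xi;\pi;\varphi)=(d^i\xi;d^i\pi;f\xi-\pi f-d^{i-1}\varphi)$ with $(f\xi)(x_1,\dots)=f(\xi(x_1,\dots))$, $(\pi f)(x_1,\dots)=\pi(f(x_1),\dots)$. $H^2_{\mathrm{Zinb}}(f,f)=\ker d^2_f/\operatorname{im} d^1_f$. A deformation of $f$ is a formal power series $\Theta_t=\sum_{i\ge0}\theta_it^i$ with $\theta_0=(m_R;m_S;f)$ and $\theta_i=(m_{R,i};m_{S,i};f_i)\in C^2_{\mathrm{Zinb}}(f,f)$, such that for $*=R,S$ the bilinear map $M_{*,t}=\sum_i m_{*,i}t^i$ satisfies $M_{*,t}(M_{*,t}(x,y),z)=M_{*,t}(x,M_{*,t}(y,z))+M_{*,t}(x,M_{*,t}(z,y))$, and $F_t=\sum_if_it^i$ satisfies $F_t(M_{R,t}(x,y))=M_{S,t}(F_t(x),F_t(y))$. A formal isomorphism of $f$ is $\Phi_t=(\Phi_{R,t};\Phi_{S,t})=\sum_{i\ge0}(\phi_{R,i};\phi_{S,i})t^i$ with $(\phi_{R,0};\phi_{S,0})=(\mathrm{Id}_R;\mathrm{Id}_S)$ and $\phi_{R,i}\in\mathrm{Hom}_K(R,R)$, $\phi_{S,i}\in\mathrm{Hom}_K(S,S)$. Deformations $\Theta_t=(M_{R,t};M_{S,t};F_t)$ and $\overline{\Theta}_t=(\overline{M}_{R,t};\overline{M}_{S,t};\overline{F}_t)$ are equivalent if for some formal isomorphism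 $\Phi_t$: $\overline{M}_{R,t}=\Phi_{R,t}M_{R,t}\Phi_{R,t}^{-1}$ (meaning $(x,y)\mapsto\Phi_{R,t}(M_{R,t}(\Phi_{R,t}^{-1}x,\Phi_{R,t}^{-1}y))$), likewise for $S$, and $\overline{F}_t=\Phi_{S,t}F_t\Phi_{R,t}^{-1}$. The trivial deformation is $\Theta_t=\theta_0=(m_R;m_S;f)$. The morphism $f$ is rigid if every deformation of $f$ is equivalent to the trivial deformation. *)

(* Defs.v *)
From HB Require Import structures.
From mathcomp Require Import all_boot all_order all_algebra.
Set Implicit Arguments. Unset Strict Implicit. Unset Printing Implicit Defensive.
Import GRing.Theory.
Local Open Scope ring_scope.

Section Zinbiel.
Variable K : fieldType.

Definition lin1 (U V : lmodType K) (g : U -> V) : Prop :=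
  forall (a : K) (x y : U), g (a *: x + y) = a *: g x + g y.

Definition bilin (U V : lmodType K) (m : U -> U -> V) : Prop :=
  (forall x, lin1 (m x)) /\ (forall y, lin1 (fun x => m x y)).

Definition zinbiel_id (U : lmodType K) (m : U -> U -> U) : Prop :=
  forall x y z, m (m x y) z = m x (m y z) + m x (m z y).

Definition zinbiel_alg (U : lmodType K) (m : U -> U -> U) : Prop :=
  bilin m /\ zinbiel_id m.

Definition zinb_morph (R S : lmodType K) (mR : R -> R -> R) (mS : S -> S -> S)
  (f : R -> S) : Prop :=
  lin1 f /\ forall x y, f (mR x y) = mS (f x) (f y).

(* Zinbiel coboundaries d^1, d^2 with values in a bimodule A over (R, mR),
   with left action la and right action ra. *)
Definition d1 (R A : lmodType K) (mR : R -> R -> R)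
  (la : R -> A -> A) (ra : A -> R -> A) (phi : R -> A) : R -> R -> A :=
  fun x y => la x (phi y) - phi (mR x y) + ra (phi x) y.

Definition d2 (R A : lmodType K) (mR : R -> R -> R)
  (la : R -> A -> A) (ra : A -> R -> A) (phi : R -> R -> A) : R -> R -> R -> A :=
  fun x y z => la x (phi y z + phi z y) - phi (mR x y) z
               + phi x (mR y z + mR z y) - ra (phi x y) z.

(* H^2_Zinb(f,f) = 0 : every 2-cocycle (xi; pi; phi) of C^*_Zinb(f,f)
   is a coboundary d^1_f(xi'; pi'; 0)  (C^0_Zinb(R,S) = 0, d^0 = 0). *)
Definition H2_vanishes (R S : lmodType K) (mR : R -> R -> R) (mS : S -> S -> S)
  (f : R -> S) : Prop :=
  forall (xi : R -> R -> R) (pi : S -> S -> S) (phi : R -> S),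
    bilin xi -> bilin pi -> lin1 phi ->
    (forall x y z, d2 mR mR mR xi x y z = 0) ->
    (forall x y z, d2 mS mS mS pi x y z = 0) ->
    (forall x y, f (xi x y) - pi (f x) (f y)
                 - d1 mR (fun r s => mS (f r) s) (fun s r => mS s (f r)) phi x y = 0) ->
    exists (xi' : R -> R) (pi' : S -> S),
      [/\ lin1 xi', lin1 pi',
          (forall x y, d1 mR mR mR xi' x y = xi x y),
          (forall x y, d1 mS mS mS pi' x y = pi x y) &
          (forall x, f (xi' x) - pi' (f x) - 0 = phi x)].

(* coefficient n of M_t(M_t(x,y),z) = M_t(x,M_t(y,z)) + M_t(x,M_t(z,y)) *)
Definition series_zinbiel (U : lmodType K) (mt : nat -> U -> U -> U) : Prop :=
  forall n x y z,
    \sum_(i < n.+1) mt i (mt (n - i)%N x y) z =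
    \sum_(i < n.+1) (mt i x (mt (n - i)%N y z) + mt i x (mt (n - i)%N z y)).

(* coefficient n of F_t(M_{R,t}(x,y)) = M_{S,t}(F_t x, F_t y) *)
Definition series_morph (R S : lmodType K) (mRt : nat -> R -> R -> R)
  (mSt : nat -> S -> S -> S) (ft : nat -> R -> S) : Prop :=
  forall n x y,
    \sum_(i < n.+1) ft i (mRt (n - i)%N x y) =
    \sum_(i < n.+1) \sum_(j < (n - i).+1) mSt i (ft j x) (ft (n - i - j)%N y).

(* Theta_t = sum_i (m_{R,i}; m_{S,i}; f_i) t^i is a deformation of f *)
Definition is_deformation (R S : lmodType K) (mR : R -> R -> R) (mS : S -> S -> S)
  (f : R -> S) (mRt : nat -> R -> R -> R) (mSt : nat -> S -> S -> S)
  (ft : nat -> R -> S) : Prop :=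
  mRt 0%N = mR /\ mSt 0%N = mS /\ ft 0%N = f /\
  (forall i, bilin (mRt i) /\ bilin (mSt i) /\ lin1 (ft i)) /\
  series_zinbiel mRt /\ series_zinbiel mSt /\ series_morph mRt mSt ft.

(* formal power series sum_i phi_i t^i with phi_0 = Id, phi_i in Hom_K(U,U) *)
Definition formal_iso (U : lmodType K) (Phi : nat -> U -> U) : Prop :=
  (forall x, Phi 0%N x = x) /\ (forall i, lin1 (Phi i)).

Definition inverse_series (U : lmodType K) (Phi Psi : nat -> U -> U) : Prop :=
  (forall i, lin1 (Psi i)) /\
  (forall n x, \sum_(i < n.+1) Phi i (Psi (n - i)%N x) = (if n is 0%N then x else 0)) /\
  (forall n x, \sum_(i < n.+1) Psi i (Phi (n - i)%N x) = (if n is 0%N then x else 0)).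

(* coefficient n of Phi_t M_t (Psi_t x, Psi_t y) *)
Definition conj2 (U : lmodType K) (Phi : nat -> U -> U) (Mt : nat -> U -> U -> U)
  (Psi : nat -> U -> U) (n : nat) (x y : U) : U :=
  \sum_(a < n.+1) \sum_(b < (n - a).+1) \sum_(c < (n - a - b).+1)
     Phi a (Mt b (Psi c x) (Psi (n - a - b - c)%N y)).

(* coefficient n of Phi_{S,t} F_t Psi_{R,t} x *)
Definition conj1 (R S : lmodType K) (PhiS : nat -> S -> S) (Ft : nat -> R -> S)
  (PsiR : nat -> R -> R) (n : nat) (x : R) : S :=
  \sum_(a < n.+1) \sum_(b < (n - a).+1) PhiS a (Ft b (PsiR (n - a - b)%N x)).

Definition deform_equiv (R S : lmodType K)
  (mRt : nat -> R -> R -> R) (mSt : nat -> S -> S -> S) (ft : nat -> R -> S)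
  (mRb : nat -> R -> R -> R) (mSb : nat -> S -> S -> S) (fb : nat -> R -> S) : Prop :=
  exists (PhiR PsiR : nat -> R -> R) (PhiS PsiS : nat -> S -> S),
    formal_iso PhiR /\ formal_iso PhiS /\
    inverse_series PhiR PsiR /\ inverse_series PhiS PsiS /\
    (forall n x y, mRb n x y = conj2 PhiR mRt PsiR n x y) /\
    (forall n x y, mSb n x y = conj2 PhiS mSt PsiS n x y) /\
    (forall n x, fb n x = conj1 PhiS ft PsiR n x).

Definition triv2 (U : lmodType K) (m : U -> U -> U) : nat -> U -> U -> U :=
  fun n => if n is 0%N then m else fun _ _ => 0.
Definition triv1 (R S : lmodType K) (f : R -> S) : nat -> R -> S :=
  fun n => if n is 0%N then f else fun _ => 0.

Definition rigid (R S : lmodType K) (mR : R -> R -> R) (mS : S -> S -> S)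
  (f : R -> S) : Prop :=
  forall mRt mSt ft, is_deformation mR mS f mRt mSt ft ->
    deform_equiv mRt mSt ft (triv2 mR) (triv2 mS) (triv1 f).

End Zinbiel.

(* Main.v *)
Require Import Defs.
From HB Require Import structures.
From mathcomp Require Import all_boot all_order all_algebra.
From Stdlib Require Import FunctionalExtensionality ClassicalEpsilon Classical.
Set Implicit Arguments. Unset Strict Implicit. Unset Printing Implicit Defensive.
Import GRing.Theory.
Local Open Scope ring_scope.

Section Lib.
Variable K : fieldType.
Implicit Types U V W : lmodType K.

Lemma lin0 U V (g : U -> V) : lin1 g -> g 0 = 0.
Proof.
move=> h; have E := h 1 0 0; rewrite scale1r addr0 scale1r in E.
by apply/eqP; rewrite -(subrr (g 0)) {2}E addrK.
Qed.

Lemma linD U V (g : U -> V) x y : lin1 g -> g (x + y) = g x + g y.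
Proof. by move=> h; rewrite -{1}(scale1r x) h scale1r. Qed.

Lemma linZ U V (g : U -> V) a x : lin1 g -> g (a *: x) = a *: g x.
Proof. by move=> h; rewrite -(addr0 (a *: x)) h lin0 // addr0. Qed.

Lemma linN U V (g : U -> V) x : lin1 g -> g (- x) = - g x.
Proof. by move=> h; rewrite -scaleN1r linZ // scaleN1r. Qed.

Lemma lin_sum U V (g : U -> V) I (r : seq I) (P : pred I) (F : I -> U) :
  lin1 g -> g (\sum_(i <- r | P i) F i) = \sum_(i <- r | P i) g (F i).
Proof. by move=> h; apply: (big_morph g (fun x y => linD x y h) (lin0 h)). Qed.

Lemma lin_sum_fun U V I (r : seq I) (P : pred I) (F : I -> U -> V) :
  (forall i, lin1 (F i)) -> lin1 (fun x => \sum_(i <- r | P i) F i x).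
Proof.
move=> h a x y; rewrite scaler_sumr -big_split /=.
by apply: eq_bigr => i _; rewrite h.
Qed.

Lemma lin_comp U V W (g : V -> W) (h : U -> V) : lin1 g -> lin1 h -> lin1 (fun x => g (h x)).
Proof. by move=> hg hh a x y; rewrite hh hg. Qed.

Lemma lin_opp U V (g : U -> V) : lin1 g -> lin1 (fun x => - g x).
Proof. by move=> h a x y; rewrite h opprD scalerN. Qed.

Lemma lin_id U : lin1 (fun x : U => x).
Proof. by []. Qed.

Lemma lin_zero U V : lin1 (fun _ : U => (0 : V)).
Proof. by move=> a x y; rewrite scaler0 addr0. Qed.

Definition cst U (x : U) : nat -> U := fun n => if n is 0%N then x else 0.
Definition sh U (u : nat -> U) : nat -> U := fun n => if n is m.+1 then u m else 0.
Definition tl U (u : nat -> U) : nat -> U := fun n => u n.+1.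
Definition lc U (a : K) (u v : nat -> U) : nat -> U := fun n => a *: u n + v n.
Definition conv U (c : nat -> nat -> U) : nat -> U := fun n => \sum_(i < n.+1) c i (n - i)%N.
Definition app U V (Phi : nat -> U -> V) (u : nat -> U) : nat -> V :=
  conv (fun i k => Phi i (u k)).
Definition cp U V (B : U -> U -> V) (u v : nat -> U) : nat -> V :=
  conv (fun j k => B (u j) (v k)).
Definition app2 U V (M : nat -> U -> U -> V) (u v : nat -> U) : nat -> V :=
  conv (fun i => cp (M i) u v).

Definition good U V (A : (nat -> U) -> (nat -> V)) :=
  (forall a u v, A (lc a u v) = lc a (A u) (A v)) /\ (forall u, A (sh u) = sh (A u)).

Lemma decomp U (u : nat -> U) : u = lc 1 (cst (u 0%N)) (sh (tl u)).
Proof. by apply: functional_extensionality => -[|n]; rewrite /lc /= ?scale1r ?addr0 ?scaler0 ?add0r. Qed.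

Lemma ext1 U V (A B : (nat -> U) -> (nat -> V)) : good A -> good B ->
  (forall x, A (cst x) = B (cst x)) -> forall u, A u = B u.
Proof.
move=> [lA sA] [lB sB] hc u; apply: functional_extensionality => n.
elim: n u => [|n IH] u; rewrite (decomp u) lA lB sA sB /lc /= hc //.
by rewrite IH.
Qed.

Lemma ext2 U1 U2 V (A B : (nat -> U1) -> (nat -> U2) -> (nat -> V)) :
  (forall v, good (A^~ v)) -> (forall u, good (A u)) ->
  (forall v, good (B^~ v)) -> (forall u, good (B u)) ->
  (forall x y, A (cst x) (cst y) = B (cst x) (cst y)) -> forall u v, A u v = B u v.
Proof.
move=> g1 g2 g3 g4 hc u v.
apply: (ext1 (A := A^~ v) (B := B^~ v)) => // x.
by apply: ext1 => // y.
Qed.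

Lemma ext3 U1 U2 U3 V (A B : (nat -> U1) -> (nat -> U2) -> (nat -> U3) -> (nat -> V)) :
  (forall v w, good (fun u => A u v w)) -> (forall u w, good (fun v => A u v w)) ->
  (forall u v, good (A u v)) ->
  (forall v w, good (fun u => B u v w)) -> (forall u w, good (fun v => B u v w)) ->
  (forall u v, good (B u v)) ->
  (forall x y z, A (cst x) (cst y) (cst z) = B (cst x) (cst y) (cst z)) ->
  forall u v w, A u v w = B u v w.
Proof.
move=> g1 g2 g3 g4 g5 g6 hc u v w.
apply: (ext1 (A := fun u => A u v w) (B := fun u => B u v w)) => // x.
apply: (ext2 (A := fun v w => A (cst x) v w) (B := fun v w => B (cst x) v w)) => //.
Qed.

Lemma good_comp U V W (A : (nat -> V) -> (nat -> W)) (B : (nat -> U) -> (nat -> V)) :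
  good A -> good B -> good (fun u => A (B u)).
Proof. by move=> [l1 s1] [l2 s2]; split=> *; rewrite ?l2 ?l1 ?s2 ?s1. Qed.

Lemma good_id U : good (fun u : nat -> U => u).
Proof. by []. Qed.

Lemma good_add U V (A B : (nat -> U) -> (nat -> V)) :
  good A -> good B -> good (fun u => lc 1 (A u) (B u)).
Proof.
move=> [l1 s1] [l2 s2]; split=> *; rewrite ?l1 ?l2 ?s1 ?s2;
  apply: functional_extensionality => n; rewrite /lc.
  by rewrite !scale1r scalerDr addrACA.
by case: n => //=; rewrite scaler0 addr0.
Qed.

Lemma conv_sh U (c : nat -> nat -> U) : conv (fun i => sh (c i)) = sh (conv c).
Proof.
apply: functional_extensionality => -[|n]; rewrite /conv.
  by rewrite big_ord1.
rewrite big_ord_recr /= subnn addr0; apply: eq_bigr => i _.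
by rewrite subSn // -ltnS.
Qed.

Lemma conv_shidx U (c : nat -> nat -> U) : (forall k, c 0%N k = 0) ->
  conv c = sh (conv (fun i => c i.+1)).
Proof.
move=> h; apply: functional_extensionality => -[|n]; rewrite /conv.
  by rewrite big_ord1.
by rewrite big_ord_recl h add0r /=; apply: eq_bigr => i _.
Qed.

Lemma conv_lc U a (c d : nat -> nat -> U) :
  conv (fun i => lc a (c i) (d i)) = lc a (conv c) (conv d).
Proof.
by apply: functional_extensionality => n; rewrite /conv /lc big_split /= scaler_sumr.
Qed.

Lemma conv_last U (c : nat -> nat -> U) n : (forall i k, (0 < k)%N -> c i k = 0) ->
  conv c n = c n 0%N.
Proof.
move=> h; rewrite /conv big_ord_recr /= subnn big1 ?add0r // => i _.
by apply: h; rewrite subn_gt0.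
Qed.

Lemma conv_first U (c : nat -> nat -> U) n : (forall i k, (0 < i)%N -> c i k = 0) ->
  conv c n = c 0%N n.
Proof.
move=> h; rewrite /conv big_ord_recl subn0 big1 ?addr0 // => i _.
by apply: h.
Qed.

Lemma conv0 U (c : nat -> nat -> U) : conv c 0%N = c 0%N 0%N.
Proof. by rewrite /conv big_ord1. Qed.

Definition Zn U (n : nat) (u : nat -> U) := forall k, (0 < k <= n)%N -> u k = 0.

Lemma convA U (c : nat -> nat -> U) n : (forall i k, (0 < i + k <= n)%N -> c i k = 0) ->
  Zn n (conv c).
Proof.
move=> h k hk; rewrite /conv big1 // => i _; apply: h.
by rewrite subnKC // -ltnS.
Qed.

Lemma convB U (c : nat -> nat -> U) n :
  (forall i k, (0 < i <= n)%N -> (0 < k <= n)%N -> c i k = 0) ->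
  conv c n.+1 = c 0%N n.+1 + c n.+1 0%N.
Proof.
move=> h; rewrite /conv big_ord_recl big_ord_recr /= subn0 big1 ?add0r.
  by rewrite /bump leq0n add1n subnn.
move=> i _; apply: h; rewrite /bump leq0n add1n /=.
  by rewrite ltn_ord.
by rewrite subSS subn_gt0 ltn_ord /= leq_subr.
Qed.

Definition bil U V (B : U -> U -> V) := bilin B.

Lemma app_good U V (Phi : nat -> U -> V) : (forall i, lin1 (Phi i)) -> good (app Phi).
Proof.
move=> h; split=> [a u v|u]; rewrite /app.
  rewrite -conv_lc; congr conv; apply: functional_extensionality => i.
  by apply: functional_extensionality => k; rewrite /lc h.
rewrite -conv_sh; congr conv; apply: functional_extensionality => i.
by apply: functional_extensionality => -[|k] //=; rewrite lin0.
Qed.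

Lemma app_cst U V (Phi : nat -> U -> V) x : (forall i, lin1 (Phi i)) ->
  app Phi (cst x) = fun n => Phi n x.
Proof.
move=> h; apply: functional_extensionality => n.
by rewrite /app conv_last // => i [|k] //= _; rewrite lin0.
Qed.

Lemma cp_good_l U V (B : U -> U -> V) v : bilin B -> good (fun u => cp B u v).
Proof.
move=> hB; split=> [a u u'|u]; rewrite /cp.
  rewrite -conv_lc; congr conv; apply: functional_extensionality => j.
  apply: functional_extensionality => k; rewrite /lc.
  by have := hB.2 (v k) a (u j) (u' j) => /= ->.
rewrite conv_shidx //= => k; exact: (lin0 (hB.2 (v k))).
Qed.

Lemma cp_good_r U V (B : U -> U -> V) u : bilin B -> good (fun v => cp B u v).
Proof.
move=> hB; split=> [a v v'|v]; rewrite /cp.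
  rewrite -conv_lc; congr conv; apply: functional_extensionality => j.
  by apply: functional_extensionality => k; rewrite /lc hB.1.
rewrite -conv_sh; congr conv; apply: functional_extensionality => j.
by apply: functional_extensionality => -[|k] //=; rewrite (lin0 (hB.1 _)).
Qed.

Lemma cp_cst_r U V (B : U -> U -> V) u z n : bilin B -> cp B u (cst z) n = B (u n) z.
Proof. by move=> hB; rewrite /cp conv_last // => i [|k] //= _; rewrite (lin0 (hB.1 _)). Qed.

Lemma cp_cst_l U V (B : U -> U -> V) x v n : bilin B -> cp B (cst x) v n = B x (v n).
Proof. by move=> hB; rewrite /cp conv_first ?subn0 // => -[|i] k //= _; rewrite (lin0 (hB.2 _)). Qed.

Lemma app2_good_l U V (M : nat -> U -> U -> V) v : (forall i, bilin (M i)) ->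
  good (fun u => app2 M u v).
Proof.
move=> hM; split=> [a u u'|u]; rewrite /app2.
  rewrite -conv_lc; congr conv; apply: functional_extensionality => i.
  exact: (cp_good_l v (hM i)).1.
rewrite -conv_sh; congr conv; apply: functional_extensionality => i.
exact: (cp_good_l v (hM i)).2.
Qed.

Lemma app2_good_r U V (M : nat -> U -> U -> V) u : (forall i, bilin (M i)) ->
  good (fun v => app2 M u v).
Proof.
move=> hM; split=> [a v v'|v]; rewrite /app2.
  rewrite -conv_lc; congr conv; apply: functional_extensionality => i.
  exact: (cp_good_r u (hM i)).1.
rewrite -conv_sh; congr conv; apply: functional_extensionality => i.
exact: (cp_good_r u (hM i)).2.
Qed.

Lemma app2_cst_r U V (M : nat -> U -> U -> V) u z n : (forall i, bilin (M i)) ->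
  app2 M u (cst z) n = \sum_(i < n.+1) M i (u (n - i)%N) z.
Proof. by move=> hM; rewrite /app2 /conv; apply: eq_bigr => i _; rewrite cp_cst_r. Qed.

Lemma app2_cst_l U V (M : nat -> U -> U -> V) x v n : (forall i, bilin (M i)) ->
  app2 M (cst x) v n = \sum_(i < n.+1) M i x (v (n - i)%N).
Proof. by move=> hM; rewrite /app2 /conv; apply: eq_bigr => i _; rewrite cp_cst_l. Qed.

Lemma app2_cst U V (M : nat -> U -> U -> V) x y : (forall i, bilin (M i)) ->
  app2 M (cst x) (cst y) = fun n => M n x y.
Proof.
move=> hM; apply: functional_extensionality => n.
rewrite /app2 conv_last; first by rewrite cp_cst_l.
by move=> i [|k] // _; rewrite cp_cst_l //= (lin0 ((hM i).1 _)).
Qed.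

Definition comp U V W (Phi : nat -> V -> W) (Psi : nat -> U -> V) : nat -> U -> W :=
  fun n x => app Phi (fun k => Psi k x) n.

Lemma comp_lin U V W (Phi : nat -> V -> W) (Psi : nat -> U -> V) n :
  (forall i, lin1 (Phi i)) -> (forall i, lin1 (Psi i)) -> lin1 (comp Phi Psi n).
Proof.
move=> h1 h2 a x y; rewrite /comp.
have -> : (fun k => Psi k (a *: x + y)) = lc a (fun k => Psi k x) (fun k => Psi k y).
  by apply: functional_extensionality => k; rewrite h2.
by rewrite (app_good h1).1.
Qed.

Lemma app_comp U V W (Phi : nat -> V -> W) (Psi : nat -> U -> V) u :
  (forall i, lin1 (Phi i)) -> (forall i, lin1 (Psi i)) ->
  app (comp Phi Psi) u = app Phi (app Psi u).
Proof.
move=> h1 h2.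
apply: (ext1 (A := app (comp Phi Psi)) (B := fun u => app Phi (app Psi u))).
- by apply: app_good => i; apply: comp_lin.
- by apply: good_comp; apply: app_good.
move=> x; rewrite (app_cst _ h2) app_cst //.
by move=> i; apply: comp_lin.
Qed.

Definition idser U : nat -> U -> U := fun n x => if n is 0%N then x else 0.

Lemma idser_lin U n : lin1 (@idser U n).
Proof. by case: n => [|n] a x y //=; rewrite scaler0 addr0. Qed.

Lemma app_idser U (u : nat -> U) : app (@idser U) u = u.
Proof. by apply: functional_extensionality => n; rewrite /app conv_first ?subn0 // => -[|i]. Qed.

Definition elem U (n : nat) (xi : U -> U) : nat -> U -> U :=
  fun k x => if k == 0%N then x else if k == n.+1 then xi x else 0.

Lemma elem_lin U n (xi : U -> U) k : lin1 xi -> lin1 (elem n xi k).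
Proof.
move=> h; rewrite /elem; case: (k == 0%N); first exact: lin_id.
by case: (k == n.+1) => //; exact: lin_zero.
Qed.

Lemma elem_Z U n (xi : U -> U) k x : (0 < k <= n)%N -> elem n xi k x = 0.
Proof.
case/andP=> h1 h2; rewrite /elem ifN ?ifN //; first by rewrite neq_ltn ltnS h2.
by rewrite -lt0n.
Qed.

Lemma app_elem_low U n (xi : U -> U) h k : (k <= n)%N -> app (elem n xi) h k = h k.
Proof.
move=> hk; rewrite /app /conv big_ord_recl subn0 big1 ?addr0 // => i _.
by apply: elem_Z; rewrite lift0 /= (leq_trans (ltn_ord i) hk).
Qed.

Lemma app_elem_top U n (xi : U -> U) h : Zn n h -> lin1 xi ->
  app (elem n xi) h n.+1 = h n.+1 + xi (h 0%N).
Proof.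
move=> hz hxi; rewrite /app convB; first by rewrite /elem /= eqxx.
move=> i k hi hk; rewrite hz //; exact: elem_Z.
Qed.

Fixpoint invl U (Phi : nat -> U -> U) (n : nat) : nat -> U -> U :=
  match n with
  | 0%N => fun k x => x
  | m.+1 => fun k x => if k == m.+1 then - \sum_(i < m.+1) Phi i.+1 (invl Phi m (m - i)%N x)
                       else invl Phi m k x
  end.

Definition inv U (Phi : nat -> U -> U) k := invl Phi k k.

Lemma invl_stab U (Phi : nat -> U -> U) n k : (k <= n)%N -> invl Phi n k = invl Phi k k.
Proof.
elim: n => [|n IH] hk; first by move: hk; rewrite leqn0 => /eqP ->.
have [-> //|ne] := eqVneq k n.+1.
rewrite -IH; last by rewrite -ltnS ltn_neqAle ne hk.
by apply: functional_extensionality => x /=; rewrite ifN.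
Qed.

Lemma inv0 U (Phi : nat -> U -> U) x : inv Phi 0%N x = x.
Proof. by []. Qed.

Lemma invS U (Phi : nat -> U -> U) m x :
  inv Phi m.+1 x = - \sum_(i < m.+1) Phi i.+1 (inv Phi (m - i)%N x).
Proof.
rewrite /inv /= eqxx; congr (- _); apply: eq_bigr => i _.
by rewrite invl_stab // leq_subr.
Qed.

Lemma inv_lin U (Phi : nat -> U -> U) : (forall i, lin1 (Phi i)) -> forall k, lin1 (inv Phi k).
Proof.
move=> h k; elim: k {-2}k (leqnn k) => [|n IH] k hk.
  by move: hk; rewrite leqn0 => /eqP ->; exact: lin_id.
have [->|ne] := eqVneq k n.+1; last by apply: IH; rewrite -ltnS ltn_neqAle ne hk.
have -> : inv Phi n.+1 = fun x => - \sum_(i < n.+1) Phi i.+1 (inv Phi (n - i)%N x).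
  by apply: functional_extensionality => x; rewrite invS.
apply: lin_opp; apply: lin_sum_fun => i; apply: lin_comp => //.
by apply: IH; rewrite leq_subr.
Qed.

Lemma inv_right U (Phi : nat -> U -> U) x n : formal_iso Phi ->
  app Phi (fun k => inv Phi k x) n = cst x n.
Proof.
move=> [h0 hl]; case: n => [|m]; first by rewrite /app conv0 h0.
rewrite /app /conv big_ord_recl h0 subn0 invS /=.
rewrite addrC; apply/eqP; rewrite subr_eq0; apply/eqP.
by apply: eq_bigr => i _; rewrite subSS.
Qed.

Lemma inv_local U (Phi Phi' : nat -> U -> U) N :
  (forall i, (i <= N)%N -> forall x, Phi i x = Phi' i x) ->
  forall k, (k <= N)%N -> forall x, inv Phi k x = inv Phi' k x.
Proof.
move=> h k; elim: k {-2}k (leqnn k) => [|n IH] k hk.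
  by move: hk; rewrite leqn0 => /eqP -> _.
have [->|ne] := eqVneq k n.+1; last by apply: IH; rewrite -ltnS ltn_neqAle ne hk.
move=> hN x; rewrite !invS; congr (- _); apply: eq_bigr => i _.
rewrite IH ?leq_subr //; last by rewrite (leq_trans (leq_subr _ _)) // ltnW.
by rewrite h // (leq_trans _ hN) // ltnS -ltnS ltn_ord.
Qed.

Lemma inv_iso U (Phi : nat -> U -> U) : formal_iso Phi -> formal_iso (inv Phi).
Proof. by move=> [h0 hl]; split => //; exact: inv_lin. Qed.

Lemma inv_R U (Phi : nat -> U -> U) u : formal_iso Phi -> app Phi (app (inv Phi) u) = u.
Proof.
move=> hf; have [h0 hl] := hf.
apply: (ext1 (A := fun u => app Phi (app (inv Phi) u)) (B := fun u => u)) => //.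
- by apply: good_comp; apply: app_good => //; exact: inv_lin.
move=> x; rewrite app_cst; last exact: inv_lin.
by apply: functional_extensionality => n; rewrite inv_right.
Qed.

Lemma inv_L U (Phi : nat -> U -> U) u : formal_iso Phi -> app (inv Phi) (app Phi u) = u.
Proof.
move=> hf; have hf' := inv_iso hf.
have E : forall w, app Phi w = app (inv (inv Phi)) w.
  by move=> w; rewrite -{1}(inv_R w hf') inv_R.
by rewrite E inv_R.
Qed.

End Lib.

Section Lib2.
Variable K : fieldType.
Implicit Types U V W : lmodType K.

Lemma bil0l U V (B : U -> U -> V) y : bilin B -> B 0 y = 0.
Proof. by move=> hB; exact: (lin0 (hB.2 y)). Qed.
Lemma bil0r U V (B : U -> U -> V) x : bilin B -> B x 0 = 0.
Proof. by move=> hB; exact: (lin0 (hB.1 x)). Qed.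

Lemma cst_lc U a (x y : U) : cst (a *: x + y) = lc a (cst x) (cst y).
Proof. by apply: functional_extensionality => -[|n]; rewrite /lc //= scaler0 addr0. Qed.

Section Conj.
Variables (U V : lmodType K).

Lemma conj2_eq (Phi Psi : nat -> U -> U) (M : nat -> U -> U -> U) n x y :
  (forall i, lin1 (Phi i)) -> (forall i, lin1 (Psi i)) -> (forall i, bilin (M i)) ->
  conj2 Phi M Psi n x y = app Phi (app2 M (app Psi (cst x)) (app Psi (cst y))) n.
Proof.
move=> h1 h2 h3; rewrite !app_cst //.
rewrite /conj2 /app /app2 /cp /conv; apply: eq_bigr => a _.
rewrite lin_sum //; apply: eq_bigr => b _; rewrite lin_sum //.
Qed.

Lemma conj2_bil (Phi Psi : nat -> U -> U) (M : nat -> U -> U -> U) n :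
  (forall i, lin1 (Phi i)) -> (forall i, lin1 (Psi i)) -> (forall i, bilin (M i)) ->
  bilin (conj2 Phi M Psi n).
Proof.
move=> h1 h2 h3; split=> [x|y] a u v /=; rewrite !conj2_eq // cst_lc (app_good h2).1.
  by rewrite (app2_good_r _ h3).1 (app_good h1).1.
by rewrite (app2_good_l _ h3).1 (app_good h1).1.
Qed.

Lemma conj2_op (Phi Psi : nat -> U -> U) (M : nat -> U -> U -> U) u v :
  (forall i, lin1 (Phi i)) -> (forall i, lin1 (Psi i)) -> (forall i, bilin (M i)) ->
  app2 (conj2 Phi M Psi) u v = app Phi (app2 M (app Psi u) (app Psi v)).
Proof.
move=> h1 h2 h3.
have hb : forall i, bilin (conj2 Phi M Psi i) by move=> i; apply: conj2_bil.
apply: (ext2 (A := app2 (conj2 Phi M Psi))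
             (B := fun u v => app Phi (app2 M (app Psi u) (app Psi v)))).
- by move=> w; apply: app2_good_l.
- by move=> w; apply: app2_good_r.
- move=> w; apply: (good_comp (A := app Phi)); first exact: app_good.
  by apply: (good_comp (A := fun t => app2 M t (app Psi w))); [apply: app2_good_l|apply: app_good].
- move=> w; apply: (good_comp (A := app Phi)); first exact: app_good.
  by apply: (good_comp (A := fun t => app2 M (app Psi w) t)); [apply: app2_good_r|apply: app_good].
move=> x y; rewrite app2_cst //; apply: functional_extensionality => n.
by rewrite conj2_eq.
Qed.

Lemma conj2_0 (Phi Psi : nat -> U -> U) (M : nat -> U -> U -> U) x y :
  (forall z, Phi 0%N z = z) -> (forall z, Psi 0%N z = z) ->
  conj2 Phi M Psi 0 x y = M 0%N x y.
Proof. by move=> h1 h2; rewrite /conj2 !big_ord1 /= h1 !h2. Qed.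

Lemma conj2_local (Phi Phi' Psi Psi' : nat -> U -> U) (M : nat -> U -> U -> U) n x y :
  (forall i, (i <= n)%N -> forall z, Phi i z = Phi' i z) ->
  (forall i, (i <= n)%N -> forall z, Psi i z = Psi' i z) ->
  conj2 Phi M Psi n x y = conj2 Phi' M Psi' n x y.
Proof.
move=> h1 h2; rewrite /conj2; apply: eq_bigr => a _.
apply: eq_bigr => b _; apply: eq_bigr => c _.
rewrite h1; last by rewrite -ltnS ltn_ord.
have hc : (c <= n)%N.
  by rewrite (leq_trans _ (leq_subr a n)) // (leq_trans _ (leq_subr b _)) // -ltnS ltn_ord.
by rewrite h2 // h2 // !(leq_trans (leq_subr _ _)) // leq_subr.
Qed.

Lemma conj1_eq (Phi : nat -> V -> V) (F : nat -> U -> V) (Psi : nat -> U -> U) n x :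
  (forall i, lin1 (Phi i)) -> (forall i, lin1 (F i)) -> (forall i, lin1 (Psi i)) ->
  conj1 Phi F Psi n x = app Phi (app F (app Psi (cst x))) n.
Proof.
move=> h1 h2 h3; rewrite !app_cst //.
rewrite /conj1 /app /conv; apply: eq_bigr => a _; rewrite lin_sum //.
Qed.

Lemma conj1_lin (Phi : nat -> V -> V) (F : nat -> U -> V) (Psi : nat -> U -> U) n :
  (forall i, lin1 (Phi i)) -> (forall i, lin1 (F i)) -> (forall i, lin1 (Psi i)) ->
  lin1 (conj1 Phi F Psi n).
Proof.
move=> h1 h2 h3 a u v; rewrite !conj1_eq // cst_lc (app_good h3).1.
by rewrite (app_good h2).1 (app_good h1).1.
Qed.

Lemma conj1_op (Phi : nat -> V -> V) (F : nat -> U -> V) (Psi : nat -> U -> U) u :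
  (forall i, lin1 (Phi i)) -> (forall i, lin1 (F i)) -> (forall i, lin1 (Psi i)) ->
  app (conj1 Phi F Psi) u = app Phi (app F (app Psi u)).
Proof.
move=> h1 h2 h3.
apply: (ext1 (A := app (conj1 Phi F Psi)) (B := fun u => app Phi (app F (app Psi u)))).
- by apply: app_good => i; apply: conj1_lin.
- apply: (good_comp (A := app Phi)); first exact: app_good.
  by apply: (good_comp (A := app F)); exact: app_good.
move=> x; rewrite app_cst; last by move=> i; apply: conj1_lin.
by apply: functional_extensionality => n; rewrite conj1_eq.
Qed.

Lemma conj1_0 (Phi : nat -> V -> V) (F : nat -> U -> V) (Psi : nat -> U -> U) x :
  (forall z, Phi 0%N z = z) -> (forall z, Psi 0%N z = z) ->
  conj1 Phi F Psi 0 x = F 0%N x.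
Proof. by move=> h1 h2; rewrite /conj1 !big_ord1 /= h1 h2. Qed.

Lemma conj1_local (Phi Phi' : nat -> V -> V) (F : nat -> U -> V) (Psi Psi' : nat -> U -> U) n x :
  (forall i, (i <= n)%N -> forall z, Phi i z = Phi' i z) ->
  (forall i, (i <= n)%N -> forall z, Psi i z = Psi' i z) ->
  conj1 Phi F Psi n x = conj1 Phi' F Psi' n x.
Proof.
move=> h1 h2; rewrite /conj1; apply: eq_bigr => a _.
apply: eq_bigr => b _.
rewrite h1; last by rewrite -ltnS ltn_ord.
by rewrite h2 // !(leq_trans (leq_subr _ _)) // leq_subr.
Qed.

Definition Zin (M : nat -> U -> U -> U) := forall u v w,
  app2 M (app2 M u v) w = lc 1 (app2 M u (app2 M v w)) (app2 M u (app2 M w v)).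

Lemma zin_op (M : nat -> U -> U -> U) : (forall i, bilin (M i)) -> series_zinbiel M -> Zin M.
Proof.
move=> hM hz.
apply: (ext3 (A := fun u v w => app2 M (app2 M u v) w)
  (B := fun u v w => lc 1 (app2 M u (app2 M v w)) (app2 M u (app2 M w v)))).
- by move=> v w; apply: (good_comp (A := fun t => app2 M t w)); apply: app2_good_l.
- by move=> u w; apply: (good_comp (A := fun t => app2 M t w));
    [apply: app2_good_l|apply: app2_good_r].
- by move=> u v; apply: app2_good_r.
- move=> v w; apply: (good_add (A := fun u => app2 M u (app2 M v w))
    (B := fun u => app2 M u (app2 M w v))); by apply: app2_good_l.
- move=> u w; apply: (good_add (A := fun v => app2 M u (app2 M v w))
    (B := fun v => app2 M u (app2 M w v))).
    by apply: (good_comp (A := fun t => app2 M u t)); [apply: app2_good_r|apply: app2_good_l].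
  by apply: (good_comp (A := fun t => app2 M u t)); [apply: app2_good_r|apply: app2_good_r].
- move=> u v; apply: (good_add (A := fun w => app2 M u (app2 M v w))
    (B := fun w => app2 M u (app2 M w v))).
    by apply: (good_comp (A := fun t => app2 M u t)); [apply: app2_good_r|apply: app2_good_r].
  by apply: (good_comp (A := fun t => app2 M u t)); [apply: app2_good_r|apply: app2_good_l].
move=> x y z; rewrite !app2_cst //; apply: functional_extensionality => n.
rewrite /lc app2_cst_r // !app2_cst_l // scale1r hz big_split //.
Qed.

Lemma zin_conj (Phi : nat -> U -> U) (M : nat -> U -> U -> U) :
  formal_iso Phi -> (forall i, bilin (M i)) -> Zin M -> Zin (conj2 Phi M (inv Phi)).
Proof.
move=> hf hM hz; have [h0 hl] := hf; have hl' := inv_lin hl.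
move=> u v w; rewrite !conj2_op // !inv_L // hz.
by rewrite (app_good hl).1.
Qed.

End Conj.

Lemma morph_op (R S : lmodType K) (MR : nat -> R -> R -> R) (MS : nat -> S -> S -> S)
  (F : nat -> R -> S) :
  (forall i, bilin (MR i)) -> (forall i, bilin (MS i)) -> (forall i, lin1 (F i)) ->
  series_morph MR MS F -> forall u v, app F (app2 MR u v) = app2 MS (app F u) (app F v).
Proof.
move=> h1 h2 h3 hm.
apply: (ext2 (A := fun u v => app F (app2 MR u v))
             (B := fun u v => app2 MS (app F u) (app F v))).
- by move=> w; apply: (good_comp (A := app F)); [apply: app_good|apply: app2_good_l].
- by move=> w; apply: (good_comp (A := app F)); [apply: app_good|apply: app2_good_r].
- by move=> w; apply: (good_comp (A := fun t => app2 MS t (app F w)));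
    [apply: app2_good_l|apply: app_good].
- by move=> w; apply: (good_comp (A := fun t => app2 MS (app F w) t));
    [apply: app2_good_r|apply: app_good].
move=> x y; rewrite app2_cst // !app_cst //; apply: functional_extensionality => n.
exact: hm.
Qed.

Lemma morph_conj (R S : lmodType K) (MR : nat -> R -> R -> R) (MS : nat -> S -> S -> S)
  (F : nat -> R -> S) (PR : nat -> R -> R) (PS : nat -> S -> S) :
  (forall i, bilin (MR i)) -> (forall i, bilin (MS i)) -> (forall i, lin1 (F i)) ->
  formal_iso PR -> formal_iso PS ->
  (forall u v, app F (app2 MR u v) = app2 MS (app F u) (app F v)) ->
  forall u v, app (conj1 PS F (inv PR)) (app2 (conj2 PR MR (inv PR)) u v) =
    app2 (conj2 PS MS (inv PS)) (app (conj1 PS F (inv PR)) u) (app (conj1 PS F (inv PR)) v).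
Proof.
move=> h1 h2 h3 hR hS hm u v.
have [_ lR] := hR; have [_ lS] := hS; have lR' := inv_lin lR; have lS' := inv_lin lS.
by rewrite !conj2_op // !conj1_op // !inv_L // hm.
Qed.

Section Sparse.
Variables (U V : lmodType K) (n : nat).

Definition ZF (G : nat -> U -> V) := forall i, (0 < i <= n)%N -> forall x, G i x = 0.
Definition ZB (D : nat -> U -> U -> V) := forall i, (0 < i <= n)%N -> forall x y, D i x y = 0.

Lemma Zn_cp (B : U -> U -> V) h h' : bilin B -> Zn n h -> Zn n h' -> Zn n (cp B h h').
Proof.
move=> hB z1 z2; apply: convA => i k /andP[h0 hn].
case: i h0 hn => [|i] /= h0 hn; first by rewrite z2 ?h0 // bil0r.
by rewrite z1 ?bil0l // (leq_trans _ hn) // leq_addr.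
Qed.

Lemma Zn_app (G : nat -> U -> V) w : (forall i, lin1 (G i)) -> ZF G -> Zn n w -> Zn n (app G w).
Proof.
move=> hl hG hw; apply: convA => i k /andP[h0 hn].
case: i h0 hn => [|i] /= h0 hn; first by rewrite hw ?h0 // lin0.
by rewrite hG // (leq_trans _ hn) // leq_addr.
Qed.

Lemma Zn_app2 (D : nat -> U -> U -> V) h h' : (forall i, bilin (D i)) -> ZB D ->
  Zn n h -> Zn n h' -> Zn n (app2 D h h').
Proof.
move=> hl hD z1 z2; apply: convA => i k /andP[h0 hn].
case: i h0 hn => [|i] /= h0 hn; first by apply: Zn_cp => //; rewrite h0.
by rewrite /cp /conv big1 // => j _; rewrite hD //= (leq_trans _ hn) // leq_addr.
Qed.

Lemma app_top (G : nat -> U -> V) w : (forall i, lin1 (G i)) -> ZF G -> Zn n w ->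
  app G w n.+1 = G 0%N (w n.+1) + G n.+1 (w 0%N).
Proof. by move=> hl hG hw; rewrite /app convB // => i k hi hk; rewrite hG. Qed.

Lemma cp_top (B : U -> U -> V) h h' : bilin B -> Zn n h -> Zn n h' ->
  cp B h h' n.+1 = B (h 0%N) (h' n.+1) + B (h n.+1) (h' 0%N).
Proof. by move=> hB z1 z2; rewrite /cp convB // => i k hi hk; rewrite z1 // bil0l. Qed.

Lemma app2_top (D : nat -> U -> U -> V) h h' : (forall i, bilin (D i)) -> ZB D ->
  Zn n h -> Zn n h' ->
  app2 D h h' n.+1 = D 0%N (h 0%N) (h' n.+1) + D 0%N (h n.+1) (h' 0%N) + D n.+1 (h 0%N) (h' 0%N).
Proof.
move=> hl hD z1 z2; rewrite /app2 convB; first by rewrite cp_top // /cp conv0.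
by move=> i k hi hk; rewrite /cp /conv big1 // => j _; rewrite hD.
Qed.

Lemma app2_at0 (D : nat -> U -> U -> V) h h' : app2 D h h' 0%N = D 0%N (h 0%N) (h' 0%N).
Proof. by rewrite /app2 conv0 /cp conv0. Qed.

Lemma app_at0 (G : nat -> U -> V) w : app G w 0%N = G 0%N (w 0%N).
Proof. by rewrite /app conv0. Qed.

End Sparse.

End Lib2.

Section Lib3.
Variable K : fieldType.

Lemma grpZ (V : zmodType) (A B C Dd E F : V) :
  F + C = A + Dd + (B + E) -> A + B - C + (Dd + E) - F = 0.
Proof.
move=> h; have -> : F = A + Dd + (B + E) - C by rewrite -h addrK.
by apply/eqP; rewrite subr_eq0; apply/eqP; rewrite addrAC addrACA.
Qed.

Lemma grpM (V : zmodType) (F P Q a b : V) :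
  F + Q = a + b + P -> F - P - (a - Q + b) = 0.
Proof.
move=> h; have -> : F = a + b + P - Q by rewrite -h addrK.
apply/eqP; rewrite subr_eq0; apply/eqP.
by rewrite (addrAC (a + b + P)) addrK addrAC.
Qed.

Lemma grpA (V : zmodType) (a b c : V) : - a + - b + (a - c + b) + c = 0.
Proof.
by rewrite (addrAC a) -opprD addKr addNr.
Qed.

Lemma grpF (V : zmodType) (a b : V) : - a + (a - b - 0) + b = 0.
Proof. by rewrite subr0 addKr addNr. Qed.

Section Gen.
Variable U : lmodType K.

Lemma Zn_cst (x : U) n : Zn n (cst x).
Proof. by move=> [|k]. Qed.

Lemma zin_cocycle (D : nat -> U -> U -> U) n : (forall i, bilin (D i)) -> ZB n D -> Zin D ->
  forall x y z, d2 (D 0%N) (D 0%N) (D 0%N) (D n.+1) x y z = 0.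
Proof.
move=> hl hZ hz x y z.
have E := f_equal (fun s => s n.+1) (hz (cst x) (cst y) (cst z)).
rewrite /= !app2_cst // in E.
have zw : forall a b, Zn n (fun k => D k a b) by move=> a b k hk; exact: hZ.
rewrite /lc (app2_top hl hZ (zw x y) (@Zn_cst z n)) (app2_top hl hZ (@Zn_cst x n) (zw y z))
  (app2_top hl hZ (@Zn_cst x n) (zw z y)) /= in E.
rewrite !(bil0r _ (hl 0%N)) !(bil0l _ (hl 0%N)) add0r !addr0 scale1r in E.
rewrite /d2 (linD _ _ ((hl 0%N).1 x)) (linD _ _ ((hl n.+1).1 x)).
exact: grpZ.
Qed.

Lemma iso_step (P : nat -> U -> U) n (q : U -> U) : formal_iso P -> lin1 q ->
  formal_iso (comp (elem n q) P).
Proof.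
move=> [h0 hl] lq; split=> [x|i]; first by rewrite /comp app_at0 /elem /= h0.
by apply: comp_lin => // j; apply: elem_lin.
Qed.

Lemma hfacts (P : nat -> U -> U) n (q : U -> U) x : formal_iso P -> lin1 q ->
  let h := app P (app (inv (comp (elem n q) P)) (cst x)) in
  (forall k, (k <= n)%N -> h k = cst x k) /\ h n.+1 = - q x.
Proof.
move=> hf lq h; have [h0 hl] := hf; have hf' := iso_step n hf lq.
have lE : forall i, lin1 (elem n q i) by move=> i; apply: elem_lin.
have hE : app (elem n q) h = cst x by rewrite /h -app_comp // inv_R.
have low : forall k, (k <= n)%N -> h k = cst x k.
  by move=> k hk; rewrite -(app_elem_low q h hk) hE.
split => //.
have zh : Zn n h by move=> k /andP[k0 kn]; rewrite low //; case: k k0 kn.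
have := app_elem_top zh lq; rewrite hE (low 0%N) //= => /esym/eqP.
by rewrite addr_eq0 => /eqP.
Qed.

Lemma adv_mult (P : nat -> U -> U) (M : nat -> U -> U -> U) n (q : U -> U) :
  formal_iso P -> (forall i, bilin (M i)) -> lin1 q -> ZB n (conj2 P M (inv P)) ->
  (forall x y, d1 (M 0%N) (M 0%N) (M 0%N) q x y = conj2 P M (inv P) n.+1 x y) ->
  ZB n.+1 (conj2 (comp (elem n q) P) M (inv (comp (elem n q) P))).
Proof.
move=> hf hM lq hZ hd.
have [h0 hl] := hf; have hf' := iso_step n hf lq; have [h0' hl'] := hf'.
have lE : forall i, lin1 (elem n q i) by move=> i; apply: elem_lin.
set P' := comp (elem n q) P.
have il := inv_lin hl; have il' := inv_lin hl'.
have bD : forall i, bilin (conj2 P M (inv P) i) by move=> i; apply: conj2_bil.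
have bD' : forall i, bilin (conj2 P' M (inv P') i) by move=> i; apply: conj2_bil.
have Op : forall u v, app2 (conj2 P' M (inv P')) u v =
   app (elem n q) (app2 (conj2 P M (inv P)) (app P (app (inv P') u)) (app P (app (inv P') v))).
  move=> u v; rewrite !conj2_op // /P' app_comp // !inv_L //.
move=> i /andP[i0 iS] x y.
have := f_equal (fun s => s i) (Op (cst x) (cst y)); rewrite app2_cst //= => ->.
have [lowx topx] := @hfacts P n q x hf lq; have [lowy topy] := @hfacts P n q y hf lq.
set hx := app P _ in lowx topx *; set hy := app P _ in lowy topy *.
have zx : Zn n hx by move=> k /andP[k0 kn]; rewrite lowx //; case: k k0 kn.
have zy : Zn n hy by move=> k /andP[k0 kn]; rewrite lowy //; case: k k0 kn.
have zw := Zn_app2 bD hZ zx zy.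
have [->|ne] := eqVneq i n.+1; last first.
  have iln : (i <= n)%N by rewrite -ltnS ltn_neqAle ne iS.
  by rewrite app_elem_low // zw // i0.
rewrite app_elem_top // app2_at0 (app2_top bD hZ zx zy) -hd.
rewrite !(lowx 0%N) // !(lowy 0%N) // topx topy /= !conj2_0 //.
rewrite /d1 (linN _ ((hM 0%N).1 x)).
have := linN (q x) ((hM 0%N).2 y) => /= ->.
exact: grpA.
Qed.

End Gen.

Lemma adv_F (R S : lmodType K) (PR : nat -> R -> R) (PS : nat -> S -> S) (F : nat -> R -> S)
  n (qR : R -> R) (qS : S -> S) :
  formal_iso PR -> formal_iso PS -> (forall i, lin1 (F i)) -> lin1 qR -> lin1 qS ->
  ZF n (conj1 PS F (inv PR)) ->
  (forall x, F 0%N (qR x) - qS (F 0%N x) - 0 = conj1 PS F (inv PR) n.+1 x) ->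
  ZF n.+1 (conj1 (comp (elem n qS) PS) F (inv (comp (elem n qR) PR))).
Proof.
move=> hR hS hF lqR lqS hZ hd.
have [h0 hl] := hR; have hR' := iso_step n hR lqR; have [h0' hl'] := hR'.
have [s0 sl] := hS; have hS' := iso_step n hS lqS; have [s0' sl'] := hS'.
have lE : forall i, lin1 (elem n qS i) by move=> i; apply: elem_lin.
have il := inv_lin hl; have il' := inv_lin hl'.
have lD : forall i, lin1 (conj1 PS F (inv PR) i) by move=> i; apply: conj1_lin.
have lD' : forall i, lin1 (conj1 (comp (elem n qS) PS) F (inv (comp (elem n qR) PR)) i).
  by move=> i; apply: conj1_lin.
have Op : forall u, app (conj1 (comp (elem n qS) PS) F (inv (comp (elem n qR) PR))) u =
   app (elem n qS) (app (conj1 PS F (inv PR)) (app PR (app (inv (comp (elem n qR) PR)) u))).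
  by move=> u; rewrite !conj1_op // app_comp // !inv_L.
move=> i /andP[i0 iS] x.
have := f_equal (fun s => s i) (Op (cst x)); rewrite app_cst //= => ->.
have [lowx topx] := @hfacts R PR n qR x hR lqR.
set hx := app PR _ in lowx topx *.
have zx : Zn n hx by move=> k /andP[k0 kn]; rewrite lowx //; case: k k0 kn.
have zw := Zn_app lD hZ zx.
have [->|ne] := eqVneq i n.+1; last first.
  have iln : (i <= n)%N by rewrite -ltnS ltn_neqAle ne iS.
  by rewrite app_elem_low // zw // i0.
rewrite app_elem_top // app_at0 (app_top lD hZ zx) -hd.
rewrite !(lowx 0%N) // topx /= !conj1_0 //.
rewrite (linN _ (hF 0%N)).
exact: grpF.
Qed.

Lemma morph_cocycle (R S : lmodType K) (DR : nat -> R -> R -> R) (DS : nat -> S -> S -> S)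
  (DF : nat -> R -> S) n :
  (forall i, bilin (DR i)) -> (forall i, bilin (DS i)) -> (forall i, lin1 (DF i)) ->
  ZB n DR -> ZB n DS -> ZF n DF ->
  (forall u v, app DF (app2 DR u v) = app2 DS (app DF u) (app DF v)) ->
  forall x y, DF 0%N (DR n.+1 x y) - DS n.+1 (DF 0%N x) (DF 0%N y)
    - d1 (DR 0%N) (fun r s => DS 0%N (DF 0%N r) s) (fun s r => DS 0%N s (DF 0%N r)) (DF n.+1) x y = 0.
Proof.
move=> bR bS lF zR zS zF hm x y.
have E := f_equal (fun s => s n.+1) (hm (cst x) (cst y)).
rewrite /= app2_cst // !app_cst // in E.
have zw : Zn n (fun k => DR k x y) by move=> k hk; exact: zR.
have zf : forall a, Zn n (fun k => DF k a) by move=> a k hk; exact: zF.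
rewrite (app_top lF zF zw) (app2_top bS zS (zf x) (zf y)) /= in E.
rewrite /d1; exact: grpM.
Qed.

End Lib3.

Section Main.
Variable K : fieldType.
Variables (R S : lmodType K) (mR : R -> R -> R) (mS : S -> S -> S) (f : R -> S)
  (mRt : nat -> R -> R -> R) (mSt : nat -> S -> S -> S) (ft : nat -> R -> S).
Hypothesis Hdef : is_deformation mR mS f mRt mSt ft.
Hypothesis H2 : H2_vanishes mR mS f.

Lemma bR i : bilin (mRt i). Proof. by case: Hdef => _ [_ [_ [h _]]]; case: (h i). Qed.
Lemma bS i : bilin (mSt i). Proof. by case: Hdef => _ [_ [_ [h _]]]; case: (h i) => _ []. Qed.
Lemma lF i : lin1 (ft i). Proof. by case: Hdef => _ [_ [_ [h _]]]; case: (h i) => _ []. Qed.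
Lemma eR : mRt 0%N = mR. Proof. by case: Hdef. Qed.
Lemma eS : mSt 0%N = mS. Proof. by case: Hdef => _ []. Qed.
Lemma eF : ft 0%N = f. Proof. by case: Hdef => _ [_ []]. Qed.
Lemma ZRop : Zin mRt. Proof. apply: zin_op; first exact: bR. by case: Hdef => _ [_ [_ [_ []]]]. Qed.
Lemma ZSop : Zin mSt. Proof. apply: zin_op; first exact: bS. by case: Hdef => _ [_ [_ [_ [_ []]]]]. Qed.
Lemma MFop u v : app ft (app2 mRt u v) = app2 mSt (app ft u) (app ft v).
Proof.
apply: morph_op; [exact: bR|exact: bS|exact: lF|].
by case: Hdef => _ [_ [_ [_ [_ []]]]].
Qed.

Definition st := ((nat -> R -> R) * (nat -> S -> S))%type.
Definition DR (P : st) := conj2 P.1 mRt (inv P.1).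
Definition DS (P : st) := conj2 P.2 mSt (inv P.2).
Definition DF (P : st) := conj1 P.2 ft (inv P.1).
Definition Inv n (P : st) :=
  [/\ formal_iso P.1, formal_iso P.2, ZB n (DR P), ZB n (DS P) & ZF n (DF P)].

Definition H2hyp (xi : R -> R -> R) (pi : S -> S -> S) (phi : R -> S) :=
  bilin xi /\ bilin pi /\ lin1 phi /\ (forall x y z, d2 mR mR mR xi x y z = 0) /\
  (forall x y z, d2 mS mS mS pi x y z = 0) /\
  (forall x y, f (xi x y) - pi (f x) (f y)
     - d1 mR (fun r s => mS (f r) s) (fun s r => mS s (f r)) phi x y = 0).

Definition H2con (xi : R -> R -> R) (pi : S -> S -> S) (phi : R -> S) (q : (R -> R) * (S -> S)) :=
  [/\ lin1 q.1, lin1 q.2, (forall x y, d1 mR mR mR q.1 x y = xi x y),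
      (forall x y, d1 mS mS mS q.2 x y = pi x y) &
      (forall x, f (q.1 x) - q.2 (f x) - 0 = phi x)].

Lemma H2ex xi pi phi : exists q, H2hyp xi pi phi -> H2con xi pi phi q.
Proof.
case: (classic (H2hyp xi pi phi)) => [[h1 [h2 [h3 [h4 [h5 h6]]]]]|hn].
  have [xi' [pi' [l1 l2 e1 e2 e3]]] := H2 h1 h2 h3 h4 h5 h6.
  by exists (xi', pi') => _; split.
by exists ((fun x => x), (fun x => x)) => /hn.
Qed.

Definition gch xi pi phi := proj1_sig (constructive_indefinite_description _ (H2ex xi pi phi)).

Lemma gch_spec xi pi phi : H2hyp xi pi phi -> H2con xi pi phi (gch xi pi phi).
Proof. exact: (proj2_sig (constructive_indefinite_description _ (H2ex xi pi phi))). Qed.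

Definition next n (P : st) : st :=
  let q := gch (DR P n.+1) (DS P n.+1) (DF P n.+1) in
  (comp (elem n q.1) P.1, comp (elem n q.2) P.2).

Fixpoint build n : st := match n with 0%N => (@idser K R, @idser K S) | m.+1 => next m (build m) end.

Lemma D_basics P : formal_iso P.1 -> formal_iso P.2 ->
  (forall i, bilin (DR P i)) /\ (forall i, bilin (DS P i)) /\ (forall i, lin1 (DF P i)).
Proof.
move=> [_ l1] [_ l2]; have il1 := inv_lin l1; have il2 := inv_lin l2.
split; first by move=> i; apply: conj2_bil => //; exact: bR.
split; first by move=> i; apply: conj2_bil => //; exact: bS.
by move=> i; apply: conj1_lin => //; exact: lF.
Qed.

Lemma D0s P : formal_iso P.1 -> formal_iso P.2 ->
  [/\ DR P 0%N = mR, DS P 0%N = mS & DF P 0%N = f].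
Proof.
move=> [h1 _] [h2 _]; split; do 2? apply: functional_extensionality => ?.
- by rewrite /DR conj2_0 ?eR.
- by rewrite /DS conj2_0 ?eS.
by rewrite /DF conj1_0 ?eF.
Qed.

Lemma cocycle n P : Inv n P -> H2hyp (DR P n.+1) (DS P n.+1) (DF P n.+1).
Proof.
case=> hR hS zR zS zF; have [bDR [bDS lDF]] := D_basics hR hS.
have [e1 e2 e3] := D0s hR hS.
have [_ l1] := hR; have [_ l2] := hS.
do 3 (split; first by []).
split.
  move=> x y z; have := zin_cocycle bDR zR (zin_conj hR bR ZRop) x y z.
  by rewrite e1.
split.
  move=> x y z; have := zin_cocycle bDS zS (zin_conj hS bS ZSop) x y z.
  by rewrite e2.
move=> x y; have := morph_cocycle bDR bDS lDF zR zS zF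
  (morph_conj bR bS lF hR hS MFop) x y.
by rewrite e1 e2 e3.
Qed.

Lemma advance n P : Inv n P -> Inv n.+1 (next n P).
Proof.
move=> hI; have [l1 l2 e1 e2 e3] := gch_spec (cocycle hI).
case: hI => hR hS zR zS zF.
split; rewrite /= ?/DR ?/DS ?/DF /=.
- exact: iso_step.
- exact: iso_step.
- apply: adv_mult => //; first exact: bR.
  by move=> x y; rewrite eR; exact: e1.
- apply: adv_mult => //; first exact: bS.
  by move=> x y; rewrite eS; exact: e2.
apply: adv_F => //; first exact: lF.
by move=> x; rewrite eF; exact: e3.
Qed.

Lemma build_inv n : Inv n (build n).
Proof.
elim: n => [|n IH]; last exact: advance.
split; try by split => //= i; exact: idser_lin.
- by move=> [|i] /andP[].
- by move=> [|i] /andP[].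
by move=> [|i] /andP[].
Qed.

Lemma build_stab m k : (k <= m)%N -> forall x y,
  (build m).1 k x = (build k).1 k x /\ (build m).2 k y = (build k).2 k y.
Proof.
elim: m => [|m IH] hk x y; first by move: hk; rewrite leqn0 => /eqP ->.
have [->//|ne] := eqVneq k m.+1.
have km : (k <= m)%N by rewrite -ltnS ltn_neqAle ne hk.
by rewrite /= /next /= /comp !app_elem_low //; exact: IH.
Qed.

Lemma main_rigid : deform_equiv mRt mSt ft (triv2 mR) (triv2 mS) (triv1 f).
Proof.
pose PhiR := fun k x => (build k).1 k x.
pose PhiS := fun k x => (build k).2 k x.
have agR : forall n i, (i <= n)%N -> forall x, PhiR i x = (build n).1 i x.
  by move=> n i hi x; rewrite (build_stab hi x 0).1.
have agS : forall n i, (i <= n)%N -> forall x, PhiS i x = (build n).2 i x.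
  by move=> n i hi x; rewrite (build_stab hi 0 x).2.
have isoR : formal_iso PhiR.
  by split=> // i; have [[_ l] _ _ _ _] := build_inv i; exact: l.
have isoS : formal_iso PhiS.
  by split=> // i; have [_ [_ l] _ _ _] := build_inv i; exact: l.
have invs : forall (U : lmodType K) (Phi : nat -> U -> U), formal_iso Phi -> inverse_series Phi (inv Phi).
  move=> U Phi hf; split; first exact: (inv_lin hf.2).
  split=> n x; first exact: inv_right.
  have := f_equal (fun s => s n) (inv_L (cst x) hf); rewrite app_cst //; exact: hf.2.
exists PhiR, (inv PhiR), PhiS, (inv PhiS).
do 4 (split; first by [|exact: invs]).
split.
  move=> n x y.
  have -> : conj2 PhiR mRt (inv PhiR) n x y = DR (build n) n x y.
    by apply: conj2_local => i hi z; [exact: agR|exact: (inv_local (agR n))].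
  case: n => [|n]; first by have [_ _ e1 _ _] := build_inv 0; rewrite /DR conj2_0 ?eR.
  by have [_ _ z _ _] := build_inv n.+1; rewrite z //= leqnn.
split.
  move=> n x y.
  have -> : conj2 PhiS mSt (inv PhiS) n x y = DS (build n) n x y.
    by apply: conj2_local => i hi z; [exact: agS|exact: (inv_local (agS n))].
  case: n => [|n]; first by rewrite /DS conj2_0 ?eS.
  by have [_ _ _ z _] := build_inv n.+1; rewrite z //= leqnn.
move=> n x.
have -> : conj1 PhiS ft (inv PhiR) n x = DF (build n) n x.
  by apply: conj1_local => i hi z; [exact: agS|exact: (inv_local (agR n))].
case: n => [|n]; first by rewrite /DF conj1_0 ?eF.
by have [_ _ _ _ z] := build_inv n.+1; rewrite z //= leqnn.
Qed.

End Main.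

Theorem corollary4p2 (K : fieldType) (R S : lmodType K)
  (mR : R -> R -> R) (mS : S -> S -> S) (f : R -> S) :
  zinbiel_alg mR -> zinbiel_alg mS -> zinb_morph mR mS f ->
  H2_vanishes mR mS f -> rigid mR mS f.
Proof.
move=> _ _ _ H2 mRt mSt ft Hdef.
exact: main_rigid.
Qed.
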